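(* Let $q$ be a prime power, $N=q^2-1$, $\alpha\in\mathbb{F}_{q^2}$ with $\mathbb{F}_{q^2}=\mathbb{F}_q(\alpha)$, $g$ a primitive root of $\mathbb{F}_{q^2}$, and $M=\{\log_g(t-\alpha):t\in\mathbb{F}_q\}$ (so $0\notin M$ and $|M|=q$). Let $$\Phi=\frac{1}{\sqrt{q+1}}\mathcal{F}^{(N)}_{M\cup\{0\}}\in\mathbb{C}^{(q+1)\times(q^2-1)},$$ with columns $\Phi_0,\dots,\Phi_{N-1}$, and for $j=0,\dots,q-2$ let $T_j=\{j+k(q-1):0\le k\le q\}$. Then: (1) for each $0\le j\le q-2$, the $(q+1)\times(q+1)$ submatrix $\Phi_{T_j}$ (columns indexed by $T_j$) is unitary, i.e. its columns form an orthonormal basis of $\mathbb{C}^{q+1}$; (2) for $k_1\in T_{j_1}$, $k_2\in T_{j_2}$ with $j_1\neq j_2$, $$\frac{\sqrt q-1}{q+1}\le|\langle\Phi_{k_1},\Phi_{k_2}\rangle|\le\frac{\sqrt q+1}{q+1}.$$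
   Context: $\log_g u$ for $u\in\mathbb{F}_{q^2}^*$ is the unique integer $m$ with $0\le m<q^2-1$ and $g^m=u$. $\mathcal{F}^{(N)}$ is the $N\times N$ Fourier matrix with $(k,j)$ entry $e^{2\pi i kj/N}$, $0\le k,j\le N-1$; for $M'\subset\{0,\dots,N-1\}$, $\mathcal{F}^{(N)}_{M'}$ is the submatrix of rows with indices in $M'$. $\langle u,v\rangle=\sum_r u_r\overline{v_r}$. *)

(* Defs.v *)
From HB Require Import structures.
From mathcomp Require Import all_boot all_order all_algebra all_field.
Set Implicit Arguments. Unset Strict Implicit. Unset Printing Implicit Defensive.
Import Order.TTheory GRing.Theory Num.Theory.
Local Open Scope ring_scope.

Definition logg (F : finFieldType) (g u : F) : nat :=
  if [pick m : 'I_(#|F|.-1) | g ^+ m == u] is Some m then val m else 0%N.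

(* exp(2 pi i / N): N.-root (-1) is exp(i pi / N) (minimal argument root). *)
Definition omega (N : nat) : algC := (N.-root (-1)) ^+ 2.

Definition fourier (N k j : nat) : algC := omega N ^+ (k * j).

Definition Phi (N q : nat) (r c : nat) : algC :=
  (sqrtC (q.+1)%:R)^-1 * fourier N r c.

Definition ip (N q : nat) (S : pred nat) (k1 k2 : nat) : algC :=
  \sum_(r < N | S r) Phi N q r k1 * (Phi N q r k2)^*.

Definition T (q j : nat) : pred nat :=
  fun k => [exists m : 'I_q.+1, k == (j + m * q.-1)%N].

(* Main.v *)
Require Import Defs.
From HB Require Import structures.
From mathcomp Require Import all_boot all_order all_algebra all_field.
From mathcomp Require Import ring zify.
Import Order.TTheory GRing.Theory Num.Theory.
Local Open Scope ring_scope.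

Set Implicit Arguments. Unset Strict Implicit. Unset Printing Implicit Defensive.

Lemma norm1_of_pow (x : algC) n : (0 < n)%N -> `|x| ^+ n = 1 -> `|x| = 1.
Proof. by move=> n0 h; apply/eqP; rewrite -(pexpr_eq1 n0) // h. Qed.


Lemma unit_conj (x : algC) : `|x| = 1 -> x * x^* = 1.
Proof. by move=> h; rewrite -normCK h expr1n. Qed.


Lemma geom_sum (x : algC) t : x ^+ t = 1 ->
  \sum_(j < t) x ^+ j = if x == 1 then t%:R else 0.
Proof.
move=> xt; case: eqP => [->|/eqP x1].
  by rewrite (eq_bigr (fun _ => 1)) ?sumr_const ?card_ord // => i _; rewrite expr1n.
have : (x - 1) * \sum_(j < t) x ^+ j = 0 by rewrite -subrX1 xt subrr.
by move/eqP; rewrite mulf_eq0 subr_eq0 (negbTE x1) => /eqP.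
Qed.

Lemma norm_sub1 (u : algC) : `|u| = 1 -> `|u - 1| ^+ 2 = 2 - 2 * 'Re u.
Proof.
move=> h; rewrite normCK rmorphB rmorph1 /= ReE.
have e := unit_conj h.
rewrite mulrBl !mulrBr e mulr1 mul1r.
rewrite [2 * _]mulrC -mulrA mulVf ?mulr1; last by rewrite pnatr_eq0.
ring.
Qed.

Lemma conj_prim (eps : algC) t : (0 < t)%N -> t.-primitive_root eps ->
  eps^* = eps ^+ t.-1.
Proof.
move=> t0 pe; have et := prim_expr_order pe.
have ne : `|eps| = 1 by apply: (norm1_of_pow t0); rewrite -normrX et normr1.
have e1 := unit_conj ne.
have e2 : eps * eps ^+ t.-1 = 1 by rewrite -exprS prednK.
have nz : eps != 0 by apply/eqP=> e0; move: e1; rewrite e0 mul0r => /eqP; rewrite eq_sym oner_eq0.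
by apply: (mulfI nz); rewrite e1 e2.
Qed.

Lemma mod_kl t k l : (k < t)%N -> (l < t)%N ->
  ((k + t.-1 * l) == 0 %[mod t]) = (k == l).
Proof.
move=> kt lt; have t0 : (0 < t)%N by lia.
apply/idP/eqP => [h|->]; last first.
  have -> : (l + t.-1 * l = l * t)%N by rewrite -{1}(mul1n l) -mulnDl add1n prednK // mulnC.
  by rewrite modnMl mod0n.
have h2 : (k + t.-1 * l + l == l %[mod t]).
  by rewrite -modnDml (eqP h) mod0n add0n.
have e : (k + t.-1 * l + l = l * t + k)%N.
  by rewrite -[in RHS](prednK t0) mulnS [(l * _)%N]mulnC; lia.
by move: h2; rewrite e modnMDl !modn_small // => /eqP.
Qed.

Lemma parseval (z0 eps : algC) t : (0 < t)%N -> t.-primitive_root eps -> `|z0| = 1 ->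
  \sum_(j < t) `|\sum_(k < t) (z0 * eps ^+ j) ^+ k| ^+ 2 = (t * t)%:R.
Proof.
move=> t0 pe nz0.
have ce := conj_prim t0 pe; have et := prim_expr_order pe.
have term : forall (j k l : nat), (z0 * eps ^+ j) ^+ k * ((z0 * eps ^+ j) ^+ l)^* =
    z0 ^+ k * (z0^*) ^+ l * (eps ^+ (k + t.-1 * l)) ^+ j.
  move=> j k l; rewrite rmorphXn rmorphM rmorphXn /= ce !exprMn -!exprM.
  rewrite mulnDl exprD [(j * k)%N]mulnC [(j * l)%N]mulnC mulnA. ring.
transitivity (\sum_(j < t) \sum_(k < t) \sum_(l < t)
   z0 ^+ k * (z0^*) ^+ l * (eps ^+ (k + t.-1 * l)) ^+ j).
  apply: eq_bigr => j _; rewrite normCK rmorph_sum /= mulr_suml; apply: eq_bigr => k _.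
  by rewrite mulr_sumr; apply: eq_bigr => l _; exact: term.
rewrite exchange_big /=.
under eq_bigr => k _ do rewrite exchange_big /=.
transitivity (\sum_(k < t) (t%:R : algC)); last by rewrite sumr_const card_ord natrM mulr_natl.
apply: eq_bigr => k _.
have gs : forall l : 'I_t, \sum_(j < t) z0 ^+ k * z0^* ^+ l * eps ^+ (k + t.-1 * l) ^+ j
   = z0 ^+ k * z0^* ^+ l * (if (k == l :> nat) then t%:R else 0).
  move=> l; rewrite -mulr_sumr geom_sum; last by rewrite exprAC et expr1n.
  have -> : (eps ^+ (k + t.-1 * l) == 1) = (k == l :> nat).
    by rewrite -(expr0 eps) (eq_prim_root_expr pe) mod_kl.
  done.
rewrite (bigD1 k) //= gs eqxx big1 ?addr0.
  by rewrite -exprMn unit_conj // expr1n mul1r.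
by move=> l lk; rewrite gs; case: eqP => [e|]; [by rewrite (val_inj e) eqxx in lk | rewrite mulr0].
Qed.

Lemma core (y : algC) t : (1 < t)%N -> `|y| = 1 -> y != 1 ->
  exists z, z ^+ t = y /\ 'Re y < 'Re z.
Proof.
move=> t1 ny y1; have t0 : (0 < t)%N by apply: ltnW.
have [eps pe] := C_prim_root_exists t0.
have et := prim_expr_order pe.
have ne : `|eps| = 1 by apply: (norm1_of_pow t0); rewrite -normrX et normr1.
set z0 := t.-root y; have z0t : z0 ^+ t = y := rootCK t0 y.
have nz0 : `|z0| = 1 by apply: (norm1_of_pow t0); rewrite -normrX z0t ny.
have ut : forall j, (z0 * eps ^+ j) ^+ t = y.
  by move=> j; rewrite exprMn z0t exprAC et expr1n mulr1.
case: (boolP [exists j : 'I_t, 'Re y < 'Re (z0 * eps ^+ j)]) => [/existsP [j hj]|].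
  by exists (z0 * eps ^+ j).
move/existsPn => hall.
have hle : forall j : 'I_t, `|\sum_(k < t) (z0 * eps ^+ j) ^+ k| ^+ 2 <= 1.
  move=> j; have := hall j; have := ut j.
  set u := z0 * eps ^+ j; set S := \sum_(k < t) u ^+ k => uy hj.
  have nu : `|u| = 1 by rewrite normrM nz0 normrX ne expr1n mulr1.
  have e1 : `|u - 1| ^+ 2 * `|S| ^+ 2 = `|y - 1| ^+ 2.
    by rewrite -exprMn -normrM -subrX1 uy.
  have hy : 0 < `|y - 1| ^+ 2 by rewrite exprn_gt0 // normr_gt0 subr_eq0.
  have hu : `|y - 1| ^+ 2 <= `|u - 1| ^+ 2.
    rewrite !norm_sub1 // lerD2l lerN2 ler_pM2l ?ltr0n //.
    by rewrite real_leNgt ?Creal_Re.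
  have hu0 : 0 < `|u - 1| ^+ 2 by apply: lt_le_trans hu.
  by rewrite -(ler_pM2l hu0) mulr1 e1.
have := parseval t0 pe nz0.
have hs : \sum_(j < t) `|\sum_(k < t) (z0 * eps ^+ j) ^+ k| ^+ 2 <= \sum_(j < t) (1 : algC).
  by apply: ler_sum => j _; exact: hle.
move: hs; rewrite sumr_const card_ord => hs e; rewrite e -[1 *+ t]mulr_natr mul1r ler_nat in hs.
exfalso; move: hs t1; clear; nia.
Qed.

Lemma omega_prim N : (1 < N)%N -> N.-primitive_root (omega N).
Proof.
move=> N1; have N0 : (0 < N)%N by apply: ltnW.
pose y : algC := N.-root (-1).
have yN : y ^+ N = -1 := rootCK N0 (-1).
have ny : `|y| = 1 by apply: (norm1_of_pow N0); rewrite -normrX yN normrN1.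
have maxRe : forall z, z ^+ N = -1 -> 'Re z <= 'Re y.
  move=> z zN; case: (boolP (0 <= 'Im z)) => him.
    exact: rootC_Re_max.
  have zc : z^* ^+ N = -1 by rewrite -rmorphXn zN rmorphN1.
  rewrite -Re_conj; apply: rootC_Re_max => //.
  rewrite Im_conj oppr_ge0; apply: ltW.
  by rewrite real_ltNge ?Creal_Im ?rpred0.
have om : (omega N) ^+ N = 1.
  by rewrite /omega -/y -exprM mulnC exprM yN sqrrN expr1n.
have [m pm dm] := prim_order_exists N0 om.
have [eN|mN] := eqVneq m N; first by move: pm; rewrite eN.
exfalso.
have m0 := prim_order_gt0 pm.
have ym : (y ^+ m) ^+ 2 = 1 by rewrite -exprM mulnC exprM (prim_expr_order pm).
have Ns : N = (N %/ m * m)%N by rewrite divnK.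
have s1 : (1 < N %/ m)%N.
  have mlt : (m < N)%N by rewrite ltn_neqAle mN dvdn_leq.
  rewrite ltn_divRL //; lia.
have n11 : (1 : algC) != -1 by rewrite -subr_eq0 opprK (pnatr_eq0 _ 2).
move/eqP: ym; rewrite sqrf_eq1 => /orP [/eqP h1|/eqP h1].
  by move: yN; rewrite Ns mulnC exprM h1 expr1n => /eqP; rewrite (negbTE n11).
have y1 : y != 1.
  by apply/eqP=> e; move: yN; rewrite e expr1n => /eqP; rewrite (negbTE n11).
have [z [zs hz]] := core s1 ny y1.
have zN : z ^+ N = -1 by rewrite Ns exprM zs h1.
by move: (maxRe z zN); rewrite real_leNgt ?Creal_Re // hz.
Qed.

Lemma pow_card1 (F : finFieldType) (x : F) : x != 0 -> x ^+ #|F|.-1 = 1.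
Proof.
move=> x0; apply: (mulfI x0); rewrite mulr1 -exprS prednK ?expf_card //.
by apply/card_gt0P; exists x.
Qed.

Lemma dlog (F : finFieldType) (g x : F) : (#|F|.-1).-primitive_root g -> x != 0 ->
  exists m, (m < #|F|.-1)%N /\ g ^+ m = x.
Proof.
move=> hg x0; have [i ->] := prim_rootP hg (pow_card1 x0).
by exists i; rewrite ltn_ord.
Qed.

Lemma logg_exp (F : finFieldType) (g : F) m : (#|F|.-1).-primitive_root g ->
  logg g (g ^+ m) = (m %% #|F|.-1)%N.
Proof.
move=> hg; have n0 := prim_order_gt0 hg.
rewrite /logg; case: pickP => [m' /eqP h|none].
  move/eqP: h; rewrite (eq_prim_root_expr hg) => /eqP <-.
  by rewrite modn_small.
have := none (Ordinal (ltn_pmod m n0)); rewrite /= (expr_mod _ (prim_expr_order hg)) eqxx //.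
Qed.

Lemma logg_spec (F : finFieldType) (g x : F) : (#|F|.-1).-primitive_root g -> x != 0 ->
  (logg g x < #|F|.-1)%N /\ g ^+ (logg g x) = x.
Proof.
move=> hg x0; have n0 := prim_order_gt0 hg.
have [m [_ <-]] := dlog hg x0.
by rewrite logg_exp // ltn_pmod // (expr_mod _ (prim_expr_order hg)).
Qed.

Definition ch (F : finFieldType) (g : F) (w : algC) (a b : nat) (x : F) : algC :=
  w ^+ (logg g x * a) * (w ^+ (logg g x * b))^*.

Lemma unitw_pow (w : algC) n k : (0 < n)%N -> n.-primitive_root w -> `|w ^+ k| = 1.
Proof.
move=> n0 hw; rewrite normrX.
have -> : `|w| = 1 by apply: (norm1_of_pow n0); rewrite -normrX (prim_expr_order hw) normr1.
by rewrite expr1n.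
Qed.

Lemma ch_exp (F : finFieldType) (g : F) (w : algC) a b m :
  (#|F|.-1).-primitive_root g -> (#|F|.-1).-primitive_root w ->
  ch g w a b (g ^+ m) = w ^+ (m * a) * (w ^+ (m * b))^*.
Proof.
move=> hg hw; rewrite /ch logg_exp //.
by rewrite !exprM (expr_mod _ (prim_expr_order hw)).
Qed.

Lemma ch_mul (F : finFieldType) (g : F) (w : algC) a b x y :
  (#|F|.-1).-primitive_root g -> (#|F|.-1).-primitive_root w -> x != 0 -> y != 0 ->
  ch g w a b (x * y) = ch g w a b x * ch g w a b y.
Proof.
move=> hg hw x0 y0; have [i [_ <-]] := dlog hg x0; have [j [_ <-]] := dlog hg y0.
rewrite -exprD !ch_exp // !mulnDl !exprD rmorphM /=; ring.
Qed.

Lemma ch_norm (F : finFieldType) (g : F) (w : algC) a b x :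
  (#|F|.-1).-primitive_root w -> `|ch g w a b x| = 1.
Proof.
move=> hw; have n0 := prim_order_gt0 hw.
by rewrite /ch normrM norm_conjC !(unitw_pow _ n0 hw) mulr1.
Qed.

Lemma ch_div (F : finFieldType) (g : F) (w : algC) a b x y :
  (#|F|.-1).-primitive_root g -> (#|F|.-1).-primitive_root w -> x != 0 -> y != 0 ->
  ch g w a b (x / y) = ch g w a b x * (ch g w a b y)^*.
Proof.
move=> hg hw x0 y0.
have e : ch g w a b x = ch g w a b (x / y) * ch g w a b y.
  by rewrite -ch_mul ?divfK // mulf_neq0 ?invr_eq0.
by rewrite e -mulrA unit_conj ?mulr1 // (ch_norm _ _ _ _ hw).
Qed.

Lemma ch1 (F : finFieldType) (g : F) (w : algC) a b :
  (#|F|.-1).-primitive_root g -> (#|F|.-1).-primitive_root w -> ch g w a b 1 = 1.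
Proof.
by move=> hg hw; rewrite -(expr0 g) ch_exp // !mul0n expr0 rmorph1 mulr1.
Qed.

Lemma ch_ne1 (F : finFieldType) (g : F) (w : algC) a b m :
  (#|F|.-1).-primitive_root g -> (#|F|.-1).-primitive_root w ->
  ~~ (m * a == m * b %[mod #|F|.-1])%N -> ch g w a b (g ^+ m) != 1.
Proof.
move=> hg hw hab; rewrite ch_exp //; apply/eqP => e.
have n0 := prim_order_gt0 hw.
move: hab; rewrite -(eq_prim_root_expr hw) => /eqP; apply.
by rewrite -[w ^+ (m * a)]mulr1 -(unit_conj (unitw_pow (m * b) n0 hw)) mulrA mulrAC e mul1r.
Qed.

Lemma qsq q : (q ^ 2).-1 = (q.-1 * q.+1)%N.
Proof. case: q => // p; rewrite /=; nia. Qed.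

Lemma sum_char0 (F : finFieldType) (f : F -> algC) (u : F) : u != 0 -> f u != 1 ->
  (forall x y, x != 0 -> y != 0 -> f (x * y) = f x * f y) ->
  \sum_(x | x != 0) f x = 0.
Proof.
move=> u0 fu fm.
have e : \sum_(x | x != 0) f x = f u * \sum_(x | x != 0) f x.
  rewrite [in LHS](reindex_inj (mulfI u0)) /= mulr_sumr.
  apply: eq_big => [x|x x0]; first by rewrite mulf_eq0 negb_or u0.
  by apply: fm => //; apply: contraNneq x0 => ->; rewrite mulr0.
apply/eqP; move: e => /eqP; rewrite -subr_eq0 -{1}(mul1r (\sum_(x | x != 0) f x)) -mulrBl.
by rewrite mulf_eq0 subr_eq0 eq_sym (negbTE fu).
Qed.

Lemma indep (K F : finFieldType) (iota : {rmorphism K -> F}) (alpha : F) (a b : K) :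
  alpha \notin codom iota -> iota a = alpha * iota b -> b = 0 /\ a = 0.
Proof.
move=> ha e; have b0 : b = 0.
  apply/eqP; apply: contraNT ha => b0.
  have -> : alpha = iota (a / b) by rewrite fmorph_div /= e mulfK // fmorph_eq0.
  exact: codom_f.
by split=> //; move: e; rewrite b0 rmorph0 mulr0 => /eqP; rewrite fmorph_eq0 => /eqP.
Qed.

Lemma notcod (K F : finFieldType) (iota : {rmorphism K -> F}) (alpha : F) (t : K) :
  alpha \notin codom iota -> iota t - alpha != 0.
Proof.
move=> ha; rewrite subr_eq0; apply: contraNneq ha => <-; exact: codom_f.
Qed.

Lemma sum_option (K : finFieldType) (h : option K -> algC) :
  \sum_(o : option K) h o = h None + \sum_(t : K) h (Some t).
Proof.
rewrite (bigD1 None) //=; congr (_ + _).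
rewrite (reindex_onto (fun t : K => Some t) (fun o => if o is Some t then t else 0)) /=.
  by apply: eq_bigl => t; rewrite eqxx.
by move=> [t|].
Qed.

Definition yo (K F : finFieldType) (iota : {rmorphism K -> F}) (alpha : F) (o : option K) : F :=
  if o is Some t then iota t - alpha else 1.

Lemma decomp3 (K F : finFieldType) (iota : {rmorphism K -> F}) (alpha : F) (h : F -> algC) :
  #|F| = (#|K| ^ 2)%N -> alpha \notin codom iota ->
  \sum_(x | x != 0) h x =
  \sum_(c | c != 0) \sum_(o : option K) h (iota c * yo iota alpha o).
Proof.
move=> hF ha.
pose D := setX [set~ (0 : K)] [set: option K].
pose psi := fun p : K * option K => iota p.1 * yo iota alpha p.2.
have yo0 : forall o, yo iota alpha o != 0.
  by case=> [t|] /=; [exact: notcod | exact: oner_neq0].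
have inj : {in D &, injective psi}.
  move=> [c o] [c' o']; rewrite !inE /= !andbT => c0 c'0; rewrite /psi /=.
  case: o => [t|]; case: o' => [t'|] /= e.
  - have e2 : iota (c * t - c' * t') = alpha * iota (c - c').
      rewrite !rmorphB !rmorphM /=; apply/eqP; rewrite -subr_eq0.
      have -> : iota c * iota t - iota c' * iota t' - alpha * (iota c - iota c') =
                iota c * (iota t - alpha) - iota c' * (iota t' - alpha) by ring.
      by rewrite e subrr.
    have [/eqP] := indep ha e2; rewrite subr_eq0 => /eqP cc _.
    subst c'; congr (_, Some _); apply: (fmorph_inj iota).
    by move/mulfI: e; rewrite fmorph_eq0 => /(_ c0) /eqP; rewrite (can_eq (subrK _)) => /eqP.
  - have e2 : iota (c * t - c') = alpha * iota c.
      rewrite mulr1 in e; rewrite !rmorphB !rmorphM /= -e; ring.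
    by have [/eqP] := indep ha e2; rewrite (negbTE c0).
  - have e2 : iota (c' * t' - c) = alpha * iota c'.
      rewrite mulr1 in e; rewrite !rmorphB !rmorphM /= e; ring.
    by have [/eqP] := indep ha e2; rewrite (negbTE c'0).
  - by rewrite !mulr1 in e; rewrite (fmorph_inj iota e).
have sub : psi @: D \subset [set~ (0 : F)].
  apply/subsetP => x /imsetP [[c o]]; rewrite !inE /= andbT => c0 ->.
  by rewrite /psi mulf_neq0 ?fmorph_eq0.
have eqD : psi @: D = [set~ (0 : F)].
  apply/eqP; rewrite eqEcard sub /= card_in_imset // cardsC1 cardsX cardsC1 cardsT.
  by rewrite card_option hF qsq.
rewrite (eq_bigl (fun x => x \in [set~ (0 : F)])); last by move=> x; rewrite !inE.
rewrite -eqD big_imset //= pair_big /=.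
apply: eq_bigl => -[c o]; rewrite !inE /= andbT.
done.
Qed.

Lemma decomp4 (K F : finFieldType) (iota : {rmorphism K -> F}) (alpha : F) (h : F -> algC) :
  #|F| = (#|K| ^ 2)%N -> alpha \notin codom iota ->
  \sum_(x | x \notin codom iota) h x =
  \sum_(p : K * K | p.1 != p.2) h ((iota p.1 - alpha) / (iota p.2 - alpha)).
Proof.
move=> hF ha.
pose E := [set p : K * K | p.1 != p.2].
pose phi := fun p : K * K => (iota p.1 - alpha) / (iota p.2 - alpha).
pose C := [set x : F | x \notin codom iota].
have inj : {in E &, injective phi}.
  move=> [t s] [t' s']; rewrite !inE /= => ts t's; rewrite /phi /= => e.
  have ns := notcod t ha; have ns' := notcod t' ha.
  have ns2 := notcod s ha; have ns2' := notcod s' ha.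
  have e1 : (iota t - alpha) * (iota s' - alpha) = (iota t' - alpha) * (iota s - alpha).
    by rewrite -(divfK ns2 (iota t - alpha)) e mulrAC divfK // mulrC.
  have e2 : iota (t * s' - t' * s) = alpha * iota (t + s' - t' - s).
    rewrite !rmorphB !rmorphD !rmorphM /=; apply/eqP; rewrite -subr_eq0.
    have -> : iota t * iota s' - iota t' * iota s - alpha * (iota t + iota s' - iota t' - iota s)
       = (iota t - alpha) * (iota s' - alpha) - (iota t' - alpha) * (iota s - alpha) by ring.
    by rewrite e1 subrr.
  have [h1 h2] := indep ha e2.
  have ht' : t' = t + s' - s.
    by apply/eqP; rewrite -subr_eq0 -oppr_eq0 -h1; apply/eqP; ring.
  have h3 : (t - s) * (s' - s) = 0 by rewrite -h2 ht'; ring.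
  move/eqP: h3; rewrite mulf_eq0 !subr_eq0 (negbTE ts) /= => /eqP ss.
  by rewrite ht' ss addrK.
have sub : phi @: E \subset C.
  apply/subsetP => x /imsetP [[t s]]; rewrite !inE /= => ts ->.
  apply/codomP => -[c e]; move: e; rewrite /phi /=.
  move/(canRL (divfK (notcod s ha))) => e.
  have e2 : iota (t - c * s) = alpha * iota (1 - c).
    rewrite !rmorphB !rmorphM rmorph1 /=; apply/eqP; rewrite -subr_eq0.
    have -> : iota t - iota c * iota s - alpha * (1 - iota c) =
      (iota t - alpha) - iota c * (iota s - alpha) by ring.
    by rewrite e subrr.
  have [/eqP h1 /eqP h2] := indep ha e2.
  move: h1; rewrite subr_eq0 => /eqP c1.
  by move: h2; rewrite -c1 mul1r subr_eq0 (negbTE ts).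
have cardC : #|C| = (#|F| - #|K|)%N.
  have := cardsC [set x : F | x \in codom iota].
  rewrite cardsE card_codom; last exact: fmorph_inj.
  have -> : ~: [set x : F | x \in codom iota] = C by apply/setP => x; rewrite !inE.
  by move=> <-; rewrite addKn.
have cardE : #|E| = (#|K| * #|K| - #|K|)%N.
  have := cardsC [set p : K * K | p.1 == p.2].
  have -> : ~: [set p : K * K | p.1 == p.2] = E by apply/setP => p; rewrite !inE.
  have -> : [set p : K * K | p.1 == p.2] = [set (t, t) | t : K].
    apply/setP => -[a b]; rewrite !inE /=; apply/eqP/imsetP => [->|[t _ [-> ->]] //].
    by exists b.
  rewrite card_imset; last by move=> a b [].
  by rewrite card_prod => <-; rewrite addKn.
have eqC : phi @: E = C.
  apply/eqP; rewrite eqEcard sub /= card_in_imset // cardC cardE hF.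
  by rewrite expnS expn1.
rewrite (eq_bigl (fun x => x \in C)); last by move=> x; rewrite !inE.
rewrite -eqC big_imset //=.
by apply: eq_bigl => p; rewrite !inE.
Qed.

Lemma sumS (K : finType) (N : nat) (L : K -> nat) (E : nat -> algC) (S : pred nat) :
  (0 < N)%N -> injective L -> (forall t, (0 < L t < N)%N) ->
  (forall r, S r = (r == 0)%N || (r \in [seq L t | t <- enum K])) ->
  \sum_(r < N | S r) E r = E 0%N + \sum_(t : K) E (L t).
Proof.
move=> N0 Linj hL hS.
under eq_bigl => r do rewrite hS.
rewrite (bigD1 (Ordinal N0)) /=; last by [].
congr (_ + _).
have hLt : forall t, (L t < N)%N by move=> t; case/andP: (hL t).
pose Lo := fun t => Ordinal (hLt t).
have Loinj : {in [pred t | true] &, injective Lo}.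
  by move=> a b _ _ [] /Linj.
rewrite (eq_bigl (fun r => r \in [set Lo t | t in [pred t | true]])).
  by rewrite big_imset.
move=> r; apply/andP/imsetP => [[hr rn0]|[t _ ->]].
  have : (val r \in [seq L t | t <- enum K]).
    case/orP: hr => // /eqP r0; exfalso; move: rn0; rewrite -val_eqE /= r0 eqxx //.
  case/mapP => t _ e; exists t => //; apply: val_inj; rewrite /= e.
  done.
split.
  by apply/orP; right; apply/mapP; exists t; rewrite ?mem_enum.
rewrite -val_eqE /=; case/andP: (hL t) => h _; by rewrite -lt0n.
Qed.

Lemma ip_simpl N q (S : pred nat) k1 k2 :
  ip N q S k1 k2 = ((q.+1)%:R)^-1 *
     \sum_(r < N | S r) (omega N ^+ (r * k1) * (omega N ^+ (r * k2))^*).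
Proof.
rewrite /ip mulr_sumr; apply: eq_bigr => r _; rewrite /Phi /fourier rmorphM /=.
have s0 : 0 <= (sqrtC (q.+1)%:R : algC)^-1 by rewrite invr_ge0 sqrtC_ge0 ler0n.
rewrite (geC0_conj s0).
have -> : ((q.+1)%:R : algC)^-1 = (sqrtC (q.+1)%:R)^-1 * (sqrtC (q.+1)%:R)^-1.
  by rewrite -invfM -expr2 sqrtCK.
ring.
Qed.

Lemma modA q j m1 m2 : (1 < q)%N -> (m1 < q.+1)%N -> (m2 < q.+1)%N -> m1 != m2 ->
  ~~ (1 * (j + m1 * q.-1) == 1 * (j + m2 * q.-1) %[mod q.-1 * q.+1])%N.
Proof.
move=> q1 h1 h2 m12; rewrite !mul1n eqn_modDl [(q.-1 * q.+1)%N]mulnC -!muln_modl.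
rewrite eqn_pmul2r; last by lia.
by rewrite !modn_small.
Qed.


Lemma modB q j1 j2 m1 m2 : (1 < q)%N -> (j1 < q.-1)%N -> (j2 < q.-1)%N -> j1 != j2 ->
  ~~ (q.+1 * (j1 + m1 * q.-1) == q.+1 * (j2 + m2 * q.-1) %[mod q.-1 * q.+1])%N.
Proof.
move=> q1 h1 h2 j12; rewrite ![(q.+1 * _)%N]mulnC -!muln_modl.
rewrite eqn_pmul2r // [(j1 + _)%N]addnC [(j2 + _)%N]addnC !modnMDl !modn_small //.
Qed.

Lemma modA1 q j1 j2 m1 m2 : (1 < q)%N -> (j1 < q.-1)%N -> (j2 < q.-1)%N -> j1 != j2 ->
  ~~ (1 * (j1 + m1 * q.-1) == 1 * (j2 + m2 * q.-1) %[mod q.-1 * q.+1])%N.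
Proof.
move=> q1 h1 h2 j12; apply: contra (modB m1 m2 q1 h1 h2 j12).
by rewrite !mul1n => /eqP e; rewrite -modnMmr e modnMmr.
Qed.

Lemma iota_pow (K F : finFieldType) (iota : {rmorphism K -> F}) (c : K) :
  c != 0 -> iota c ^+ #|K|.-1 = 1.
Proof. by move=> c0; rewrite -rmorphXn pow_card1 // rmorph1. Qed.

Lemma triv (K F : finFieldType) (iota : {rmorphism K -> F}) (g : F) (w : algC) q j m1 m2 c :
  #|K| = q -> #|F|.-1 = (q.-1 * q.+1)%N ->
  (#|F|.-1).-primitive_root g -> (#|F|.-1).-primitive_root w -> c != 0 ->
  ch g w (j + m1 * q.-1) (j + m2 * q.-1) (iota c) = 1.
Proof.
move=> hK hN hg hw c0.
have x0 : iota c != 0 by rewrite fmorph_eq0.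
have [_ gl] := logg_spec hg x0.
set l := logg g (iota c) in gl *.
have h1 : g ^+ (l * q.-1) = 1 by rewrite exprM gl -hK iota_pow.
have h2 : w ^+ (l * q.-1) = 1.
  by apply/eqP; rewrite -(prim_order_dvd hw) (prim_order_dvd hg) h1.
have e : forall m, w ^+ (l * (j + m * q.-1)) = w ^+ (l * j).
  move=> m; rewrite mulnDr exprD.
  have -> : (l * (m * q.-1) = (l * q.-1) * m)%N by rewrite mulnCA mulnC.
  by rewrite (exprM w (l * q.-1) m) h2 expr1n mulr1.
rewrite /ch -/l !e unit_conj //.
exact: (unitw_pow _ (prim_order_gt0 hw) hw).
Qed.

Lemma exists_c0 (K F : finFieldType) (iota : {rmorphism K -> F}) (g : F) q :
  #|K| = q -> (1 < q)%N -> #|F|.-1 = (q.-1 * q.+1)%N ->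
  (#|F|.-1).-primitive_root g -> exists c0, iota c0 = g ^+ q.+1.
Proof.
move=> hK q1 hN hg.
case: (pickP (fun c => iota c == g ^+ q.+1)) => [c /eqP e|none]; first by exists c.
exfalso.
pose rs := g ^+ q.+1 :: [seq iota c | c <- enum (predC1 (0 : K))].
have q0 : (0 < q.-1)%N by lia.
have := @max_unity_roots F q.-1 rs q0.
have all1 : all q.-1.-unity_root rs.
  rewrite /= unity_rootE -exprM mulnC -hN (prim_expr_order hg) eqxx /=.
  apply/allP => x /mapP [c]; rewrite mem_enum => c0 ->.
  by rewrite unity_rootE -hK iota_pow.
have u : uniq rs.
  rewrite /= map_inj_uniq ?enum_uniq ?andbT; last exact: fmorph_inj.
  by apply/mapP => -[c _ e]; move: (none c); rewrite -e eqxx.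
move=> /(_ all1 u); rewrite /= size_map -cardE cardC1 hK; lia.
Qed.

Lemma sum_codom (K F : finFieldType) (iota : {rmorphism K -> F}) (h : F -> algC) :
  \sum_(x | x \in codom iota) h x = \sum_(c : K) h (iota c).
Proof.
rewrite (eq_bigl (fun x => x \in [set iota c | c in [pred c : K | true]])).
  by rewrite big_imset //; move=> a b _ _; apply: fmorph_inj.
move=> x; apply/codomP/imsetP => [[c ->]|[c _ ->]]; by exists c.
Qed.

Unset Implicit Arguments.

Theorem theorem3p3 (K F : finFieldType) (iota : {rmorphism K -> F}) (q : nat)
  (alpha g : F) :
  #|K| = q ->
  #|F| = (q ^ 2)%N ->
  alpha \notin codom iota ->
  (#|F|.-1).-primitive_root g ->
  let N := (q ^ 2).-1 in
  let M := [seq logg g (iota t - alpha) | t <- enum K] in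
  let S : pred nat := fun r => (r == 0) || (r \in M) in
  (forall j : nat, (j < q.-1)%N ->
     #|[pred r : 'I_N | S r]| = q.+1 /\
     (forall k1 k2 : nat, T q j k1 -> T q j k2 ->
        ip N q S k1 k2 = (k1 == k2)%:R))
  /\
  (forall j1 j2 k1 k2 : nat, (j1 < q.-1)%N -> (j2 < q.-1)%N -> j1 != j2 ->
     T q j1 k1 -> T q j2 k2 ->
     (sqrtC q%:R - 1) / (q.+1)%:R <= `|ip N q S k1 k2|
     <= (sqrtC q%:R + 1) / (q.+1)%:R).
Proof.
move=> hK hF ha hg N M S.
have q1 : (1 < q)%N by rewrite -hK card_finNzRing_gt1.
have hN' : #|F|.-1 = N by rewrite hF.
have hN : #|F|.-1 = (q.-1 * q.+1)%N by rewrite hN' /N qsq.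
have N1 : (1 < N)%N by rewrite -hN' hN; nia.
have N0 : (0 < N)%N by apply: ltnW.
have hw : (#|F|.-1).-primitive_root (omega N) by rewrite hN'; exact: omega_prim.
pose L := fun t => logg g (iota t - alpha).
have Lspec : forall t, (L t < N)%N /\ g ^+ L t = iota t - alpha.
  by move=> t; rewrite -hN'; apply: logg_spec => //; exact: notcod.
have Lpos : forall t, (0 < L t < N)%N.
  move=> t; have [lt e] := Lspec t; rewrite lt andbT lt0n; apply/eqP => e0.
  move: e; rewrite e0 expr0 => e.
  have e2 : alpha = iota (t - 1) by rewrite rmorphB rmorph1 /= e; ring.
  by move: ha; rewrite e2 codom_f.
have Linj : injective L.
  move=> a b e; have [_ ea] := Lspec a; have [_ eb] := Lspec b.
  by apply: (fmorph_inj iota); apply: (addIr (- alpha)); rewrite -ea -eb e.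
have hS : forall r, S r = (r == 0)%N || (r \in [seq L t | t <- enum K]) by [].
have key : forall k1 k2, ip N q S k1 k2 =
    ((q.+1)%:R)^-1 * (1 + \sum_(t : K) ch g (omega N) k1 k2 (iota t - alpha)).
  move=> k1 k2; rewrite ip_simpl.
  rewrite (@sumS K N L (fun r => omega N ^+ (r * k1) * (omega N ^+ (r * k2))^*) S N0 Linj Lpos hS).
  by rewrite !mul0n expr0 rmorph1 mulr1.
have g0 : g != 0.
  apply/eqP => e0; move: (prim_expr_order hg); rewrite e0 expr0n.
  by rewrite eqn0Ngt (prim_order_gt0 hg) /= => /eqP; rewrite eq_sym oner_eq0.
have hF2 : #|F| = (#|K| ^ 2)%N by rewrite hK.
split.
  move=> j jq; split.
    have := @sumS K N L (fun _ => 1) S N0 Linj Lpos hS.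
    rewrite sumr_const => e.
    have e' : (#|[pred r : 'I_N | S r]|%:R : algC) = 1 + \sum_(t : K) 1 := e.
    apply/eqP; rewrite -(eqr_nat algC) e' sumr_const.
    by rewrite -[#|xpredT|]/#|K| hK -natr1 addrC.
  move=> k1 k2 /existsP [m1 /eqP e1] /existsP [m2 /eqP e2].
  rewrite key e1 e2.
  have [em|nm] := eqVneq m1 m2.
    rewrite em eqxx.
    have c1 : forall x, ch g (omega N) (j + m2 * q.-1) (j + m2 * q.-1) x = 1.
      move=> x; rewrite /ch unit_conj //.
      exact: (unitw_pow _ (prim_order_gt0 hw) hw).
    under eq_bigr => t _ do rewrite c1.
    rewrite sumr_const -[#|xpredT|]/#|K| hK addrC natr1 mulVf //.
    by rewrite pnatr_eq0.
  have nm' : (m1 : nat) != m2 by [].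
  have hne := modA j q1 (ltn_ord m1) (ltn_ord m2) nm'.
  have -> : (j + m1 * q.-1 == j + m2 * q.-1)%N = false.
    apply: negbTE; apply: contra hne; rewrite !mul1n => /eqP ->; exact: eqxx.
  set a := (j + m1 * q.-1)%N; set b := (j + m2 * q.-1)%N.
  set f := ch g (omega N) a b.
  have fm : forall x y, x != 0 -> y != 0 -> f (x * y) = f x * f y.
    by move=> x y x0 y0; apply: ch_mul.
  have fg : f g != 1.
    by rewrite -(expr1 g) /f; apply: ch_ne1 => //; rewrite hN.
  have h0 := sum_char0 g0 fg fm.
  rewrite (decomp3 f hF2 ha) in h0.
  have ft : forall c : K, c != 0 -> f (iota c) = 1.
    by move=> c c0; rewrite /f /a /b (triv iota j m1 m2 hK hN hg hw c0).
  have e3 : forall c : K, c != 0 ->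
      \sum_(o : option K) f (iota c * yo iota alpha o) = 1 + \sum_(t : K) f (iota t - alpha).
    move=> c c0; rewrite sum_option /= mulr1 ft //; congr (_ + _).
    by apply: eq_bigr => t _; rewrite fm ?fmorph_eq0 ?notcod // ft // mul1r.
  have h1 : \sum_(c : K | c != 0) (1 + \sum_(t : K) f (iota t - alpha)) = 0.
    rewrite -[RHS]h0; apply: eq_bigr => x x0; by rewrite e3.
  move: h1; rewrite sumr_const => /eqP; rewrite mulrn_eq0 => /orP [|/eqP ->].
    move/eqP => c0; exfalso; move: c0 => /eqP; apply/negP; rewrite -lt0n.
    by apply/card_gt0P; exists 1; apply: oner_neq0.
  by rewrite mulr0.
move=> j1 j2 k1 k2 hj1 hj2 j12 /existsP [m1 /eqP e1] /existsP [m2 /eqP e2].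
rewrite key e1 e2.
set a := (j1 + m1 * q.-1)%N; set b := (j2 + m2 * q.-1)%N.
set f := ch g (omega N) a b.
have fm : forall x y, x != 0 -> y != 0 -> f (x * y) = f x * f y.
  by move=> x y x0 y0; apply: ch_mul.
have fg : f g != 1.
  by rewrite -(expr1 g) /f; apply: ch_ne1 => //; rewrite hN; apply: modA1.
have hx0 := sum_char0 g0 fg fm.
have [c0 ec0] := exists_c0 iota hK q1 hN hg.
have c0nz : c0 != 0.
  apply/eqP => e0; move: ec0; rewrite e0 rmorph0 => /eqP.
  by rewrite eq_sym expf_eq0 (negbTE g0) andbF.
have fc0 : f (iota c0) != 1.
  by rewrite ec0 /f; apply: ch_ne1 => //; rewrite hN; apply: modB.
have hc0 : \sum_(c : K | c != 0) f (iota c) = 0.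
  apply: (sum_char0 c0nz fc0) => x y x0 y0.
  by rewrite rmorphM fm // fmorph_eq0.
set Ss := \sum_(t : K) f (iota t - alpha).
have fn : forall x, f x * (f x)^* = 1.
  by move=> x; apply: unit_conj; rewrite /f (ch_norm _ _ _ _ hw).
have sumAll : \sum_(x : F) f x = f 0.
  rewrite (bigD1 0) //= -[RHS]addr0; congr (_ + _); exact: hx0.
have sumK : \sum_(c : K) f (iota c) = f 0.
  rewrite (bigD1 0) //= rmorph0 -[RHS]addr0; congr (_ + _); exact: hc0.
have notC : \sum_(x | x \notin codom iota) f x = 0.
  have e := sumAll; rewrite (bigID (fun x => x \in codom iota)) /= in e.
  rewrite sum_codom sumK in e.
  by apply: (addrI (f 0)); rewrite addr0.
have hsq : Ss * Ss^* = q%:R.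
  rewrite /Ss rmorph_sum /= mulr_suml.
  transitivity (\sum_(t : K) (1 + \sum_(s : K | s != t)
      f ((iota t - alpha) / (iota s - alpha)))).
    apply: eq_bigr => t _; rewrite mulr_sumr (bigD1 t) //= fn; congr (_ + _).
    apply: eq_bigr => s _; rewrite /f ch_div //; exact: notcod.
  rewrite big_split /= sumr_const -[#|xpredT|]/#|K| hK pair_big_dep /=.
  rewrite (eq_bigl (fun p : K * K => p.1 != p.2)); last first.
    by move=> [t s] /=; rewrite eq_sym.
  by rewrite -(decomp4 _ hF2 ha) notC addr0.
have nS : `|Ss| = sqrtC q%:R.
  by rewrite -hsq -normCK exprCK.
rewrite normrM normfV (ger0_norm (ler0n _ _)) [X in _ <= X <= _]mulrC.
apply/andP; split; rewrite ler_pM2r ?invr_gt0 ?ltr0n //.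
  by rewrite [1 + Ss]addrC; move: (lerB_normD Ss 1); rewrite normr1 nS.
by rewrite [1 + Ss]addrC; move: (ler_normD Ss 1); rewrite normr1 nS.
Qed.
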